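(* Let $\mathcal E$ be a centered $\mathcal A$-$\mathcal A$-bimodule and $\sigma^{\rm can}$ its canonical flip. For $(i,j)\in\{(1,2),(1,3),(2,3)\}$ let $P^{\rm can}_{ij}=\frac12(1+\sigma^{\rm can}_{ij})$ on $\mathcal E\otimes_{\mathcal A}\mathcal E\otimes_{\mathcal A}\mathcal E$. Then $P^{\rm can}_{12}|_{\mathrm{Ran}(P^{\rm can}_{23})}:\mathrm{Ran}(P^{\rm can}_{23})\to\mathrm{Ran}(P^{\rm can}_{12})$ and $P^{\rm can}_{23}|_{\mathrm{Ran}(P^{\rm can}_{12})}:\mathrm{Ran}(P^{\rm can}_{12})\to\mathrm{Ran}(P^{\rm can}_{23})$ are bimodule isomorphisms.
   Context: $\mathcal A$ is a complex unital $*$-subalgebra of a $C^*$-algebra. The center of a bimodule is $\mathcal Z(\mathcal E)=\{e\in\mathcal E: ea=ae\ \forall a\in\mathcal A\}$; $\mathcal E$ is centered if the right $\mathcal A$-linear span of $\mathcal Z(\mathcal E)$ is $\mathcal E$. For centered $\mathcal E$, $\sigma^{\rm can}$ is the unique $\mathcal A$-bimodule isomorphism of $\mathcal E\otimes_{\mathcal A}\mathcal E$ with $\sigma^{\rm can}(\omega\otimes\eta)=\eta\otimes\omega$ for $\omega,\eta\in\mathcal Z(\mathcal E)$ (it exists, and $(\sigma^{\rm can})^2=\mathrm{id}$). $\sigma^{\rm can}_{12}=\sigma^{\rm can}\otimes\mathrm{id}$, $\sigma^{\rm can}_{23}=\mathrm{id}\otimes\sigma^{\rm can}$, $\sigma^{\rm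 can}_{13}=\sigma^{\rm can}_{12}\sigma^{\rm can}_{23}\sigma^{\rm can}_{12}$. *)

(* Defs.v *)
From HB Require Import structures.
From mathcomp Require Import all_boot all_order all_algebra.
From mathcomp Require Import reals.
From mathcomp Require Import complex.
Set Implicit Arguments. Unset Strict Implicit. Unset Printing Implicit Defensive.
Import Order.TTheory GRing.Theory Num.Theory.
Local Open Scope ring_scope.

Record bimod_on (A : nzRingType) (E : zmodType) := BiMod {
  lact : A -> E -> E;
  ract : E -> A -> E;
  lactDr : forall a e1 e2, lact a (e1 + e2) = lact a e1 + lact a e2;
  lactDl : forall a b e, lact (a + b) e = lact a e + lact b e;
  lactM  : forall a b e, lact (a * b) e = lact a (lact b e);
  lact1  : forall e, lact 1 e = e;
  ractDl : forall e1 e2 a, ract (e1 + e2) a = ract e1 a + ract e2 a;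
  ractDr : forall e a b, ract e (a + b) = ract e a + ract e b;
  ractM  : forall e a b, ract e (a * b) = ract (ract e a) b;
  ract1  : forall e, ract e 1 = e;
  lractA : forall a e b, lact a (ract e b) = ract (lact a e) b }.

Definition additive_map (U V : zmodType) (f : U -> V) : Prop :=
  forall x y, f (x + y) = f x + f y.

Definition biadditive (U V W : zmodType) (f : U -> V -> W) : Prop :=
  (forall u1 u2 v, f (u1 + u2) v = f u1 v + f u2 v) /\
  (forall u v1 v2, f u (v1 + v2) = f u v1 + f u v2).

Definition balanced (A : nzRingType) (U V : zmodType) (bU : bimod_on A U)
  (bV : bimod_on A V) (W : Type) (f : U -> V -> W) : Prop :=
  forall u a v, f (ract bU u a) v = f u (lact bV a v).

Definition is_tensor (A : nzRingType) (U V T : zmodType) (bU : bimod_on A U)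
  (bV : bimod_on A V) (bT : bimod_on A T) (t : U -> V -> T) : Prop :=
  [/\ biadditive t, balanced bU bV t,
      (forall a u v, lact bT a (t u v) = t (lact bU a u) v),
      (forall u v a, ract bT (t u v) a = t u (ract bV v a)) &
      (forall (M : zmodType) (phi : U -> V -> M),
          biadditive phi -> balanced bU bV phi ->
          exists h : T -> M,
            [/\ additive_map h, (forall u v, h (t u v) = phi u v) &
                (forall h' : T -> M, additive_map h' ->
                   (forall u v, h' (t u v) = phi u v) -> forall x, h' x = h x)])].

Definition bimod_hom (A : nzRingType) (U V : zmodType) (bU : bimod_on A U)
  (bV : bimod_on A V) (f : U -> V) : Prop :=
  [/\ additive_map f,
      (forall a u, f (lact bU a u) = lact bV a (f u)) &
      (forall u a, f (ract bU u a) = ract bV (f u) a)].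

Definition center (A : nzRingType) (E : zmodType) (bE : bimod_on A E) (e : E) : Prop :=
  forall a, lact bE a e = ract bE e a.

Definition centered (A : nzRingType) (E : zmodType) (bE : bimod_on A E) : Prop :=
  forall e : E, exists n (z : 'I_n -> E) (a : 'I_n -> A),
    (forall i, center bE (z i)) /\ e = \sum_(i < n) ract bE (z i) (a i).

Definition Ran (T U : Type) (f : T -> U) (y : U) : Prop := exists x, y = f x.

(* f restricted to the subset S is a bimodule isomorphism onto the subset S'
   (S, S' are sub-bimodules in the intended use; f is a bimodule map of the
   ambient bimodules). *)
Definition bimod_iso_on (A : nzRingType) (U V : zmodType) (bU : bimod_on A U)
  (bV : bimod_on A V) (f : U -> V) (S : U -> Prop) (S' : V -> Prop) : Prop :=
  [/\ bimod_hom bU bV f,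
      (forall x, S x -> S' (f x)),
      (forall x y, S x -> S y -> f x = f y -> x = y) &
      (forall y, S' y -> exists2 x, S x & f x = y)].

Definition halfsym (R : rcfType) (A : algType R[i]) (T : zmodType)
  (bT : bimod_on A T) (s : T -> T) (x : T) : T :=
  lact bT ((2 : R[i])^-1)%:A (x + s x).

(* Main.v *)
Require Import Defs.
From HB Require Import structures.
From mathcomp Require Import all_boot all_order all_algebra.
From mathcomp Require Import reals.
From mathcomp Require Import complex.
Set Implicit Arguments. Unset Strict Implicit. Unset Printing Implicit Defensive.
Import Order.TTheory GRing.Theory Num.Theory.
Local Open Scope ring_scope.

Lemma add0 (U V : zmodType) (f : U -> V) : additive_map f -> f 0 = 0.
Proof. by move=> fA; apply: (addrI (f 0)); rewrite -fA !addr0. Qed.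

Lemma addN (U V : zmodType) (f : U -> V) x : additive_map f -> f (- x) = - f x.
Proof. by move=> fA; apply: (addrI (f x)); rewrite -fA !subrr (add0 fA). Qed.

Lemma addB (U V : zmodType) (f : U -> V) x y : additive_map f -> f (x - y) = f x - f y.
Proof. by move=> fA; rewrite fA (addN _ fA). Qed.

Lemma tens_uniq (A : nzRingType) (U V T : zmodType) (bU : bimod_on A U)
  (bV : bimod_on A V) (bT : bimod_on A T) (t : U -> V -> T) (M : zmodType)
  (F1 F2 : T -> M) :
  is_tensor bU bV bT t -> additive_map F1 -> additive_map F2 ->
  (forall u v, F1 (t u v) = F2 (t u v)) -> forall x, F1 x = F2 x.
Proof.
case=> [[tA1 tA2] tB _ _ tU] F1A F2A H x.
have [|| h [_ _ hU]] := tU M (fun u v => F1 (t u v)).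
- by split=> *; rewrite ?tA1 ?tA2 F1A.
- by move=> u a v; rewrite tB.
by rewrite (hU F1) // (hU F2).
Qed.

Lemma cent_eq (A : nzRingType) (E : zmodType) (bE : bimod_on A E) (M : zmodType)
  (G1 G2 : E -> M) : centered bE -> additive_map G1 -> additive_map G2 ->
  (forall z a, center bE z -> G1 (ract bE z a) = G2 (ract bE z a)) ->
  forall e, G1 e = G2 e.
Proof.
move=> c A1 A2 H e; have [n [z [a [zc ->]]]] := c e.
elim: n z a zc => [|n IH] z a zc; first by rewrite !big_ord0 (add0 A1) (add0 A2).
rewrite big_ord_recr /= A1 A2 IH ?H //.
Qed.

Lemma abstract (R : realType) (A : algType R[i]) (T : zmodType) (b : bimod_on A T)
  (a c : T -> T) :
  additive_map a -> additive_map c ->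
  (forall k x, a (lact b k x) = lact b k (a x)) ->
  (forall x k, a (ract b x k) = ract b (a x) k) ->
  (forall k x, c (lact b k x) = lact b k (c x)) ->
  (forall x, a (a x) = x) -> (forall x, c (c x) = x) ->
  (forall x, a (c (a x)) = c (a (c x))) ->
  bimod_iso_on b b (halfsym b a) (Ran (halfsym b c)) (Ran (halfsym b a)).
Proof.
move=> aA cA aL aR cL aI cI br.
set h : A := ((2:R[i])^-1)%:A.
have hh : h + h = 1.
  rewrite /h -scalerDl.
  have -> : (2:R[i])^-1 + 2^-1 = 1 by rewrite [RHS](splitr 1) div1r.
  by rewrite scale1r.
have hC k : h * k = k * h by rewrite /h mulr_algl mulr_algr.
have twice x : lact b h (x + x) = x by rewrite lactDr -lactDl hh lact1.
have L2 w : lact b (1 + 1) (lact b h w) = w by rewrite -lactM mulrDl mul1r hh lact1.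
have RanP (s : T -> T) : (forall k x, s (lact b k x) = lact b k (s x)) ->
    additive_map s -> (forall x, s (s x) = x) ->
    forall x, Ran (halfsym b s) x <-> s x = x.
  move=> sL sA sI x; split.
    by case=> y ->; rewrite /halfsym sL sA sI addrC.
  by move=> sx; exists x; rewrite /halfsym sx twice.
have RanA := RanP a aL aA aI; have RanC := RanP c cL cA cI.
split.
- split.
  + by move=> x y; rewrite /halfsym aA addrACA (lactDr b).
  + by move=> k x; rewrite /halfsym aL -lactDr -!lactM hC.
  + by move=> x k; rewrite /halfsym aR -ractDl lractA.
- by move=> x _; exists x.
- move=> x y /RanC Hx /RanC Hy Hxy.
  have cd : c (x - y) = x - y by rewrite (addB _ _ cA) Hx Hy.
  have ad : a (x - y) = - (x - y).
    have e1 : x + a x = y + a y by rewrite -(L2 (x + a x)) -(L2 (y + a y)) -/(halfsym b a x) Hxy.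
    apply/eqP; rewrite -subr_eq0 opprK (addB _ _ aA).
    by rewrite addrC addrACA -opprD e1 subrr.
  set d := x - y in cd ad.
  have dd : d = - d.
    have := br d; rewrite ad (addN _ cA) cd (addN _ aA) ad opprK (addN _ cA) cd.
    by [].
  apply/eqP; rewrite -subr_eq0 -/d; apply/eqP.
  by rewrite -(twice d) {2}dd subrr (add0 (lactDr b h)).
- move=> y /RanA ay.
  exists (y + c y - a (c y)).
    apply/RanC; rewrite (addB _ _ cA) cA cI -br ay.
    by rewrite [c y + y]addrC.
  rewrite /halfsym (addB _ _ aA) aA aI ay.
  have E p q r : (p + q - r) + (p + r - q) = p + p :> T.
    by rewrite addrACA (addrACA p q p r) -addrA -opprD [r + q]addrC subrr addr0.
  by rewrite E twice.
Qed.

Theorem lemma3p6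
  (R : realType) (A : algType R[i])
  (E : zmodType) (bE : bimod_on A E)
  (T2 : zmodType) (b2 : bimod_on A T2) (t2 : E -> E -> T2)
  (T3 : zmodType) (b3 : bimod_on A T3)
  (m : T2 -> E -> T3) (m' : E -> T2 -> T3)
  (sig : T2 -> T2) (s12 s23 : T3 -> T3) :
  centered bE ->
  is_tensor bE bE b2 t2 ->
  is_tensor b2 bE b3 m ->
  is_tensor bE b2 b3 m' ->
  (forall e f g, m (t2 e f) g = m' e (t2 f g)) ->
  bimod_hom b2 b2 sig ->
  (forall w h, center bE w -> center bE h -> sig (t2 w h) = t2 h w) ->
  additive_map s12 -> (forall x g, s12 (m x g) = m (sig x) g) ->
  additive_map s23 -> (forall e y, s23 (m' e y) = m' e (sig y)) ->
  bimod_iso_on b3 b3 (halfsym b3 s12) (Ran (halfsym b3 s23)) (Ran (halfsym b3 s12)) /\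
  bimod_iso_on b3 b3 (halfsym b3 s23) (Ran (halfsym b3 s12)) (Ran (halfsym b3 s23)).
Proof.
move=> cent tt2 tm tm' mm' sigH sigC s12A s12m s23A s23m.
have [[t2A1 t2A2] t2B t2L t2R _] := tt2.
have [[mA1 mA2] mB mL mR _] := tm.
have [[m'A1 m'A2] m'B m'L m'R _] := tm'.
have [sigA sigL sigR] := sigH.
have gen3 : forall F1 F2 : T3 -> T3, additive_map F1 -> additive_map F2 ->
    (forall x k, F1 (ract b3 x k) = ract b3 (F1 x) k) ->
    (forall x k, F2 (ract b3 x k) = ract b3 (F2 x) k) ->
    (forall z1 z2 z3, center bE z1 -> center bE z2 -> center bE z3 ->
       F1 (m (t2 z1 z2) z3) = F2 (m (t2 z1 z2) z3)) -> forall x, F1 x = F2 x.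
  move=> F1 F2 A1 A2 R1 R2 H.
  apply: (tens_uniq tm) => // x g.
  move: x; apply: (tens_uniq (F1 := fun x => F1 (m x g)) (F2 := fun x => F2 (m x g)) tt2).
  - by move=> ? ?; rewrite /= mA1 A1.
  - by move=> ? ?; rewrite /= mA1 A2.
  move=> u v /=.
  move: u; apply: (cent_eq (G1 := fun u => F1 (m (t2 u v) g))
                           (G2 := fun u => F2 (m (t2 u v) g)) cent).
  - by move=> ? ?; rewrite /= t2A1 mA1 A1.
  - by move=> ? ?; rewrite /= t2A1 mA1 A2.
  move=> z a zc /=; rewrite t2B.
  move: (lact bE a v) => {}v.
  move: v; apply: (cent_eq (G1 := fun v => F1 (m (t2 z v) g))
                           (G2 := fun v => F2 (m (t2 z v) g)) cent).
  - by move=> ? ?; rewrite /= t2A2 mA1 A1.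
  - by move=> ? ?; rewrite /= t2A2 mA1 A2.
  move=> z' k z'c /=; rewrite -t2R mB.
  move: (lact bE k g) => {}g.
  move: g; apply: (cent_eq (G1 := fun g => F1 (m (t2 z z') g))
                           (G2 := fun g => F2 (m (t2 z z') g)) cent).
  - by move=> ? ?; rewrite /= mA2 A1.
  - by move=> ? ?; rewrite /= mA2 A2.
  by move=> z'' c z''c /=; rewrite -mR R1 R2 H.
have r3A k : additive_map (fun x => ract b3 x k) by move=> x y; exact: ractDl.
have l3A k : additive_map (fun x => lact b3 k x) by move=> x y; exact: lactDr.
have s12R x k : s12 (ract b3 x k) = ract b3 (s12 x) k.
  move: x; apply: (tens_uniq (F1 := fun x => s12 (ract b3 x k))
                             (F2 := fun x => ract b3 (s12 x) k) tm).
  - by move=> ? ?; rewrite /= (r3A k) s12A.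
  - by move=> ? ?; rewrite /= s12A (r3A k).
  by move=> x g /=; rewrite s12m !mR s12m.
have s12L k x : s12 (lact b3 k x) = lact b3 k (s12 x).
  move: x; apply: (tens_uniq (F1 := fun x => s12 (lact b3 k x))
                             (F2 := fun x => lact b3 k (s12 x)) tm).
  - by move=> ? ?; rewrite /= (l3A k) s12A.
  - by move=> ? ?; rewrite /= s12A (l3A k).
  by move=> x g /=; rewrite s12m !mL s12m sigL.
have s23R x k : s23 (ract b3 x k) = ract b3 (s23 x) k.
  move: x; apply: (tens_uniq (F1 := fun x => s23 (ract b3 x k))
                             (F2 := fun x => ract b3 (s23 x) k) tm').
  - by move=> ? ?; rewrite /= (r3A k) s23A.
  - by move=> ? ?; rewrite /= s23A (r3A k).
  by move=> x g /=; rewrite s23m !m'R s23m sigR.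
have s23L k x : s23 (lact b3 k x) = lact b3 k (s23 x).
  move: x; apply: (tens_uniq (F1 := fun x => s23 (lact b3 k x))
                             (F2 := fun x => lact b3 k (s23 x)) tm').
  - by move=> ? ?; rewrite /= (l3A k) s23A.
  - by move=> ? ?; rewrite /= s23A (l3A k).
  by move=> x g /=; rewrite s23m !m'L s23m.
have e12 z1 z2 g : center bE z1 -> center bE z2 ->
    s12 (m (t2 z1 z2) g) = m (t2 z2 z1) g by move=> c1 c2; rewrite s12m sigC.
have e23 e z2 z3 : center bE z2 -> center bE z3 ->
    s23 (m (t2 e z2) z3) = m (t2 e z3) z2 by move=> c2 c3; rewrite !mm' s23m sigC.
have cA (F G : T3 -> T3) : additive_map F -> additive_map G ->
    additive_map (fun x => F (G x)) by move=> FA GA x y; rewrite GA FA.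
have cR (F G : T3 -> T3) : (forall x k, F (ract b3 x k) = ract b3 (F x) k) ->
    (forall x k, G (ract b3 x k) = ract b3 (G x) k) ->
    (forall x k, F (G (ract b3 x k)) = ract b3 (F (G x)) k)
  by move=> FR GR x k; rewrite GR FR.
have idA : additive_map (fun x : T3 => x) by [].
have inv12 x : s12 (s12 x) = x.
  move: x; apply: (gen3 (fun x => s12 (s12 x)) (fun x => x)) => //.
  - exact: cA.
  - exact: cR.
  by move=> z1 z2 z3 c1 c2 c3; rewrite !e12.
have inv23 x : s23 (s23 x) = x.
  move: x; apply: (gen3 (fun x => s23 (s23 x)) (fun x => x)) => //.
  - exact: cA.
  - exact: cR.
  by move=> z1 z2 z3 c1 c2 c3; rewrite !e23.
have br x : s12 (s23 (s12 x)) = s23 (s12 (s23 x)).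
  move: x; apply: (gen3 (fun x => s12 (s23 (s12 x))) (fun x => s23 (s12 (s23 x)))).
  - by apply: (cA) => //; apply: (cA).
  - by apply: (cA) => //; apply: (cA).
  - by move=> x k; rewrite s12R s23R s12R.
  - by move=> x k; rewrite s23R s12R s23R.
  by move=> z1 z2 z3 c1 c2 c3; rewrite e12 // e23 // e12 // e23 // e12 // e23.
split.
- exact: (abstract s12A s23A s12L s12R s23L inv12 inv23 br).
- exact: (abstract s23A s12A s23L s23R s12L inv23 inv12 (fun x => esym (br x))).
Qed.
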